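(* Let $G=(V,E)$ be a simple graph with $n$ vertices. Then, as polynomials in $\lambda$, $$P(\mathcal{H}_{\bullet G},\lambda)=\lambda(\lambda-1)^n\, I\!\left(G,\tfrac{1}{\lambda-1}\right).$$
   Context: A hypergraph $\mathcal{H}=(\mathcal{V},\mathcal{E})$ consists of a finite vertex set $\mathcal{V}$ and a set $\mathcal{E}$ of subsets of $\mathcal{V}$, each of size at least $1$, called edges. For a positive integer $\lambda$, a weak proper $\lambda$-colouring of $\mathcal{H}$ is a map $\phi:\mathcal{V}\to\{1,\dots,\lambda\}$ such that $|\{\phi(v):v\in e\}|>1$ for every $e\in\mathcal{E}$. $P(\mathcal{H},\lambda)$ denotes the number of weak proper $\lambda$-colourings of $\mathcal{H}$; it is a polynomial in $\lambda$ of degree $|\mathcal{V}|$ (the chromatic polynomial of $\mathcal{H}$), and is regarded as a polynomial for all real or complex $\lambda$. For a simple graph $G=(V,E)$, $\mathcal{H}_{\bullet G}$ is the hypergraph with vertex set $V\cup\{w\}$, where $w\notin V$ is a new vertex, and edge set $\{\{u,v,w\}: uv\in E\}$. The independence polynomial of $G$ is $I(G,x)=\sum_A x^{|A|}$, the sum over all independent sets $A$ of $G$ (including the empty set). *)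

(* Defs.v *)
From HB Require Import structures.
From mathcomp Require Import all_boot all_order all_algebra.
Set Implicit Arguments. Unset Strict Implicit. Unset Printing Implicit Defensive.
Import Order.TTheory GRing.Theory Num.Theory.

(* A hypergraph on a finite vertex type T is given by its edge set
   E : {set {set T}}. Colours {1,...,k} are modelled by 'I_k. *)
Definition weak_proper (T : finType) (E : {set {set T}}) (k : nat)
  (phi : {ffun T -> 'I_k}) : bool :=
  [forall f in E, 1 < #|phi @: f|].

Definition nb_colourings (T : finType) (E : {set {set T}}) (k : nat) : nat :=
  #|[set phi : {ffun T -> 'I_k} | @weak_proper T E k phi]|.

(* H_{bullet G}: vertex set option V (None is the new vertex w),
   edges {u, v, w} for uv in E(G). *)
Definition bullet_edges (V : finType) (e : rel V) : {set {set option V}} :=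
  [set [set Some uv.1; Some uv.2; None] | uv in [set uv : V * V | e uv.1 uv.2]].

Definition independent (V : finType) (e : rel V) (A : {set V}) : bool :=
  [forall u in A, forall v in A, ~~ e u v].

Definition indep_poly_eval (R : nzRingType) (V : finType) (e : rel V) (x : R) : R :=
  (\sum_(A : {set V} | independent e A) x ^+ #|A|)%R.

(* Main.v *)
Require Import Defs.
From HB Require Import structures.
From mathcomp Require Import all_boot all_order all_algebra.
Import Order.TTheory GRing.Theory Num.Theory.

Lemma prod_option (V : finType) (f : option V -> nat) :
  \prod_(o : option V) f o = f None * \prod_(v : V) f (Some v).
Proof.
rewrite (bigD1 None) //=; congr (_ * _).
rewrite (reindex_omap Some id) => [|[i|]//].
by apply: eq_bigl => j /=; rewrite eqxx.
Qed.

Section S.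
Variables (V : finType) (e : rel V).
Hypothesis e_sym : symmetric e.

Definition key k (phi : {ffun option V -> 'I_k}) : 'I_k * {set V} :=
  (phi None, [set v | phi (Some v) == phi None]).
Arguments key {k}.

Lemma wp_iff k (phi : {ffun option V -> 'I_k}) :
  weak_proper (bullet_edges e) phi = independent e [set v | phi (Some v) == phi None].
Proof.
apply/forall_inP/forall_inP.
- move=> H u; rewrite inE => /eqP hu; apply/forall_inP => v; rewrite inE => /eqP hv.
  apply/negP => euv.
  have hm : [set Some u; Some v; None] \in bullet_edges e.
    by rewrite /bullet_edges; apply/imsetP; exists (u, v); rewrite // inE.
  have := H _ hm.
  by rewrite imsetU imsetU1 !imset_set1 hu hv !setUid cards1 ltnn.
- move=> H f; rewrite /bullet_edges => /imsetP [[u v]]; rewrite inE /= => euv ->.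
  rewrite imsetU imsetU1 !imset_set1; apply/card_gt1P.
  have [hu|hu] := eqVneq (phi (Some u)) (phi None).
    have [hv|hv] := eqVneq (phi (Some v)) (phi None).
      have := H u; rewrite inE hu eqxx => /(_ isT) /forall_inP /(_ v).
      by rewrite inE hv eqxx euv => /(_ isT).
    by exists (phi (Some v)), (phi None); rewrite !inE !eqxx hv !orbT.
  by exists (phi (Some u)), (phi None); rewrite !inE !eqxx hu !orbT.
Qed.

Lemma count_key k (c : 'I_k) (A : {set V}) :
  #|[set phi : {ffun option V -> 'I_k} | key phi == (c, A)]| = k.-1 ^ #|~: A|.
Proof.
pose F (o : option V) : pred 'I_k :=
  fun j => if o is Some v then (j == c) == (v \in A) else j == c.
have -> : #|[set phi : {ffun option V -> 'I_k} | key phi == (c, A)]| = #|family F|.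
  apply: eq_card => phi; rewrite in_set xpair_eqE; apply/andP/familyP.
    move=> [/eqP hc /eqP hA] [v|]; rewrite -topredE /= /F; last by rewrite hc.
    by rewrite -hA inE hc.
  move=> H; have hc : phi None == c by have := H None.
  split => //; apply/eqP/setP => v; rewrite inE (eqP hc).
  by have := H (Some v); rewrite -topredE /= /F => /eqP.
rewrite card_family foldrE big_map big_enum /= prod_option.
have -> : #|F None| = 1 by rewrite -(card1 c); apply: eq_card.
rewrite mul1n -prod_nat_const [RHS]big_mkcond /=; apply: eq_bigr => v _.
rewrite inE; have [hv|hv] := boolP (v \in A) => /=.
  rewrite -(card1 c); apply: eq_card => j.
  by rewrite -!topredE /= /F hv eqb_id.
rewrite -[k in k.-1]card_ord -(cardC1 c); apply: eq_card => j.
by rewrite -!topredE /= /F (negbTE hv) eqbF_neg.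
Qed.

Lemma nb_eq k :
  nb_colourings (bullet_edges e) k =
  \sum_(p : 'I_k * {set V}) (if independent e p.2 then k.-1 ^ #|~: p.2| else 0).
Proof.
rewrite /nb_colourings -sum1_card (partition_big (@key k) predT) //=.
apply: eq_bigr => [[c A]] _ /=.
case: ifP => hA.
  rewrite -(@count_key k c A) -sum1_card; apply: eq_bigl => phi; rewrite !inE.
  case: eqP => hk; rewrite ?andbF ?andbT // wp_iff.
  by move: hk; rewrite /key => -[_ ->].
apply: big1 => phi; rewrite inE wp_iff; case: eqP => hk; rewrite ?andbF ?andbT // => hw.
by move: hk hw; rewrite /key => -[_ ->]; rewrite hA.
Qed.

End S.

Local Open Scope ring_scope.

Theorem theorem1 (V : finType) (e : rel V)
  (e_sym : symmetric e) (e_irr : irreflexive e) :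
  exists P : {poly rat},
    (forall k : nat, P.[k%:R] = (nb_colourings (bullet_edges e) k)%:R) /\
    (forall x : rat, x != 1 ->
       P.[x] = x * (x - 1) ^+ #|V| * indep_poly_eval e (1 / (x - 1))).
Proof.
exists (\sum_(A : {set V} | independent e A) ('X * ('X - 1) ^+ (#|V| - #|A|))).
split.
  move=> k; rewrite nb_eq -(pair_big predT predT (fun (c : 'I_k) (A : {set V}) =>
    (if independent e A then k.-1 ^ #|~: A| else 0)%N)) /=.
  rewrite sum_nat_const card_ord natrM natr_sum horner_sum big_mkcond /=.
  rewrite mulr_sumr; apply: eq_bigr => A _.
  case: ifP => _; last by rewrite mulr0.
  rewrite !hornerE natrX.
  case: k => [|k]; first by rewrite !mul0r.
  by rewrite -(cardsC A) addKn /= -addn1 natrD addrK.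
move=> x hx; rewrite horner_sum /indep_poly_eval mulr_sumr; apply: eq_bigr => A _.
rewrite !hornerE -mulrA; congr (_ * _).
rewrite -{2}(subnK (max_card (pred_of_set A))) exprD -mulrA -exprMn.
by rewrite divff ?subr_eq0 // expr1n mulr1.
Qed.
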